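(* Let $n\ge 2$ and let $\mathsf u$ be a subword of $\bm\lambda_n$ with $u_1u_2\cdots u_{n(n-1)}=e$. Then $\operatorname{rot}(\mathsf u)$ also satisfies $\operatorname{rot}(\mathsf u)_1\cdots\operatorname{rot}(\mathsf u)_{n(n-1)}=e$.
   Context: $\widetilde S_n$ is the affine symmetric group (bijections $w:\mathbb Z\to\mathbb Z$ with $w(i+n)=w(i)+n$ and $\sum_{i=1}^nw(i)=\binom{n+1}2$, under composition), with simple reflections $s_i=(\!(i,i+1)\!)$ for $i\in\{0,\dots,n-1\}$, where $(\!(i,j)\!)$ swaps $i+kn$ and $j+kn$ for all $k\in\mathbb Z$. $\bm\lambda_n$ is the word $[s_0,s_1,\dots,s_{n-1}]$ repeated $n-1$ times; its $j$-th letter ($1\le j\le n(n-1)$) is $\sigma_j=s_{(j-1)\bmod n}$ with index in $\{0,\dots,n-1\}$. A subword is a sequence $\mathsf u=[u_1,\dots,u_{n(n-1)}]$ with each $u_j\in\{\sigma_j,e\}$ ($e$ the identity). The rotation $\operatorname{rot}(\mathsf u)$ is the subword whose $j$-th entry is $e$ if and only if the $(j-1)$-th entry of $\mathsf u$ is $e$, with indices taken cyclically modulo $n(n-1)$ (so the first entry of $\operatorname{rot}(\mathsf u)$ is a skip iff $u_{n(n-1)}=e$). *)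

(* Defs.v *)
From mathcomp Require Import all_boot all_order all_algebra.
Set Implicit Arguments. Unset Strict Implicit. Unset Printing Implicit Defensive.
Import GRing.Theory Num.Theory.
Local Open Scope ring_scope.

(* Affine permutations are represented by their underlying maps int -> int.
   s_i = ((i, i+1)) for i in {0,..,n-1}: swaps i+kn and i+1+kn for all k. *)
Definition sref (n i : nat) (x : int) : int :=
  let r := (x %% n%:Z)%Z in
  if r == i%:Z then x + 1
  else if r == ((i.+1 %% n)%N)%:Z then x - 1
  else x.

(* Length of the word lambda_n = [s_0,...,s_{n-1}] repeated n-1 times. *)
Definition wlen (n : nat) : nat := (n * n.-1)%N.

(* Its letter at 0-based position k (i.e. sigma_{k+1}) is s_{k mod n}. *)
Definition letter (n k : nat) : int -> int := sref n (k %% n).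

(* A subword is encoded by b : nat -> bool, where b k = true iff the entry
   at 0-based position k (k < wlen n) is the letter sigma_{k+1} (and false iff
   it is the identity e); values at k >= wlen n are irrelevant. *)
Definition subword_prod (n : nat) (b : nat -> bool) : int -> int :=
  foldr (fun k f => (if b k then letter n k else id) \o f) id (iota 0 (wlen n)).

Definition is_id (f : int -> int) : Prop := forall x, f x = x.

(* rot(u)_j is a skip iff u_{j-1} is a skip, indices cyclic mod n(n-1). *)
Definition rotw (n : nat) (b : nat -> bool) : nat -> bool :=
  fun k => b ((k + wlen n).-1 %% wlen n)%N.

(* Main.v *)
Require Import Defs.
From mathcomp Require Import all_boot all_order all_algebra zify.
Import GRing.Theory Num.Theory.
Local Open Scope ring_scope.

Lemma modS n i : (i < n)%N -> (i.+1 %% n)%N = if i.+1 == n then 0%N else i.+1.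
Proof. move=> h; case: eqP => [->|ne]; first by rewrite modnn. rewrite modn_small //; lia. Qed.

Lemma modz_uniq (n : int) q r : 0 <= r < n -> ((q * n + r) %% n)%Z = r.
Proof. by move=> h; rewrite modzMDl modz_small. Qed.

Lemma modz_bnd (x : int) (n : nat) : (0 < n)%N -> 0 <= (x %% n)%Z < n.
Proof. move=> n0; rewrite modz_ge0 ?ltz_pmod //; lia. Qed.

Lemma modzB1 (n : nat) (x : int) : (0 < n)%N ->
  ((x - 1) %% n)%Z = if (x %% n)%Z == 0 then n%:Z - 1 else (x %% n)%Z - 1.
Proof.
move=> n0; rewrite {1}(divz_eq x n); have := modz_bnd x n n0.
move: (x %/ n)%Z (x %% n)%Z => q r hr.
case: eqP => [->|ne].
  have -> : q * n + 0 - 1 = (q - 1) * n + (n%:Z - 1) by lia.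
  apply: modz_uniq; lia.
rewrite -addrA; apply: modz_uniq; lia.
Qed.

Lemma modzB1' (n : nat) (x : int) : (0 < n)%N ->
  ((x %% n)%Z = 0 /\ ((x - 1) %% n)%Z = n%:Z - 1) \/
  ((x %% n)%Z <> 0 /\ ((x - 1) %% n)%Z = (x %% n)%Z - 1).
Proof. move=> n0; rewrite modzB1 //; case: eqP; [left|right]; done. Qed.

Lemma sref_shift n i x : (0 < n)%N -> (i < n)%N ->
  sref n (i.+1 %% n) x = sref n i (x - 1) + 1.
Proof.
move=> n0 ilt; rewrite /sref.
have hj := modS _ _ ilt; have jlt : (i.+1 %% n < n)%N by rewrite ltn_pmod.
move: (i.+1 %% n)%N hj jlt => j hj jlt.
have hk := modS _ _ jlt; move: (j.+1 %% n)%N hk => k hk.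
have := modz_bnd x n n0; have := modzB1' n x n0.
move: ((x - 1) %% n)%Z (x %% n)%Z => r' r h1 h2.
move: hj hk; repeat (case: ifP => /eqP; intro); lia.
Qed.

Lemma sref_inv n i x : (1 < n)%N -> (i < n)%N -> sref n i (sref n i x) = x.
Proof.
move=> n1 ilt; have n0 : (0 < n)%N by lia.
have hj := modS _ _ ilt.
have hx := modz_bnd x n n0.
have e1 := modzB1' n x n0.
have e2 := modzB1' n (x + 1) n0. rewrite addrK in e2.
have hx1 := modz_bnd (x + 1) n n0.
have hy : ((x %% n)%Z = i /\ sref n i x = x + 1) \/
   ((x %% n)%Z <> i /\ (x %% n)%Z = (i.+1 %% n)%N /\ sref n i x = x - 1) \/
   ((x %% n)%Z <> i /\ (x %% n)%Z <> (i.+1 %% n)%N /\ sref n i x = x).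
  rewrite /sref; repeat (case: ifP => /eqP; intro); tauto.
case: hy => [[+ ->]|[[+ [+ ->]]|[+ [+ ->]]]]; rewrite /sref;
move: hj; move: (i.+1 %% n)%N => j; move: e1 e2 hx hx1; 
move: (x %% n)%Z ((x - 1) %% n)%Z ((x + 1) %% n)%Z => r r1 r2;
repeat (case: ifP => /eqP; intro); lia.
Qed.

Definition wcomp (G : nat -> int -> int) (s : seq nat) : int -> int :=
  foldr (fun k f => G k \o f) id s.

Lemma comp_foldr G s g x : foldr (fun k (f : int -> int) => G k \o f) g s x = wcomp G s (g x).
Proof. by elim: s => //= k s IH; rewrite IH. Qed.

Lemma comp_cat G s1 s2 x : wcomp G (s1 ++ s2) x = wcomp G s1 (wcomp G s2 x).
Proof. by rewrite /wcomp foldr_cat comp_foldr. Qed.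

Lemma comp_shift (G H : nat -> int -> int) s y :
  (forall k z, k \in s -> H k.+1 z = G k (z - 1) + 1) ->
  wcomp H (map S s) y = wcomp G s (y - 1) + 1.
Proof.
elim: s => [|k s IH] hs /=; first by rewrite subrK.
rewrite hs ?mem_head //; congr (G k _ + 1).
rewrite IH ?addrK // => k' z hk; apply: hs; by rewrite in_cons hk orbT.
Qed.

Lemma modN1 n : (1 < n)%N -> ((n * n.-1).-1 %% n)%N = n.-1.
Proof.
move=> n1; have -> : (n * n.-1).-1 = ((n - 2) * n + n.-1)%N by case: n n1 => [|[|n]] //= _; lia.
by rewrite modnMDl modn_small // ltn_predL; lia.
Qed.

Theorem lemma5p6 (n : nat) (b : nat -> bool) :
  (2 <= n)%N -> is_id (subword_prod n b) -> is_id (subword_prod n (rotw n b)).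
Proof.
move=> n2 hid x.
have n0 : (0 < n)%N by lia.
set N := wlen n.
have N1 : (1 < N)%N by rewrite /N /wlen; move: n2; clear; case: n => [|[|n]] //= _; lia.
set G := fun k => if b k then letter n k else id.
set H := fun k => if rotw n b k then letter n k else id.
have eG : subword_prod n b = wcomp G (iota 0 N) by [].
have eH : subword_prod n (rotw n b) = wcomp H (iota 0 N) by [].
have Ginv : forall z, G N.-1 (G N.-1 z) = z.
  move=> z; rewrite /G; case: (b N.-1) => //=; rewrite /letter sref_inv // ltn_pmod //.
have hP : forall z, wcomp G (iota 0 N.-1) (G N.-1 z) = z.
  move=> z; move: (hid z); rewrite eG.
  have -> : N = (N.-1 + 1)%N by lia.
  by rewrite iotaD comp_cat /= add0n addn1 /=.
have hP' : forall z, G N.-1 (wcomp G (iota 0 N.-1) z) = z.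
  by move=> z; rewrite -{1}(Ginv z) hP Ginv.
rewrite eH.
have -> : N = N.-1.+1 by lia.
rewrite /= -[1%N]/(1 + 0)%N iotaDl.
have shS : forall k z, (k < N)%N -> H k.+1 z = G k (z - 1) + 1.
  move=> k z kN; rewrite /H /G /rotw -/N.
  have -> : ((k.+1 + N).-1 %% N)%N = k.
    by rewrite addSn /= modnDr modn_small.
  case: (b k) => /=; last by rewrite subrK.
  rewrite /letter -addn1 -modnDml addn1 sref_shift // ltn_pmod //.
rewrite (@comp_shift G); last first.
  move=> k z; rewrite mem_iota => /andP [_ hk]; apply: shS; lia.
have H0 : forall z, H 0%N z = G N.-1 (z - 1) + 1.
  move=> z.
  rewrite /H /G /rotw -/N add0n modn_small; last by lia.
  case: (b N.-1) => /=; last by rewrite subrK.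
  rewrite /letter -sref_shift ?ltn_pmod // /N /wlen modN1 // prednK // modnn mod0n //.
by rewrite H0 addrK hP' subrK.
Qed.
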